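(* Let $G=(\mathcal{X},\mathcal{A},\mu,V)$ be a $k$-player free game with $\mu=\mu_1\otimes\cdots\otimes\mu_k$, and let $\gamma>0$. Suppose that for each $j\in[k]$, $\mathcal{X}'_j$ is a finite alphabet and $f_j:\mathcal{X}'_j\to\mathcal{X}_j$ is a map such that, for $U_j$ uniformly random on $\mathcal{X}'_j$, the distribution of $f_j(U_j)$ is within total variation distance $\gamma/k$ of $\mu_j$. Let $G'=(\mathcal{X}',\mathcal{A},U,V')$ where $\mathcal{X}'=\mathcal{X}'_1\times\cdots\times\mathcal{X}'_k$, $U$ is the uniform distribution on $\mathcal{X}'$, and $V'(x',a)=V\big((f_1(x'_1),\dots,f_k(x'_k)),a\big)$. Then $|\mathrm{val}^*(G')-\mathrm{val}^*(G)|\le\gamma$.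
   Context: A $k$-player game $G=(\mathcal{X},\mathcal{A},\mu,V)$ has finite product alphabets $\mathcal{X}=\prod_j\mathcal{X}_j$, $\mathcal{A}=\prod_j\mathcal{A}_j$, input distribution $\mu$ on $\mathcal{X}$ and predicate $V:\mathcal{X}\times\mathcal{A}\to\{0,1\}$; the referee samples $x\leftarrow\mu$, sends $x_j$ to player $j$, and accepts iff $V(x,a)=1$. It is free if $\mu$ is a product distribution. The entangled value $\mathrm{val}^*(G)$ is the supremum of the acceptance probability over strategies where the players share a finite-dimensional entangled state and each applies a POVM (depending on their own input) to their share to produce their answer. *)

(* Defs.v *)
From HB Require Import structures.
From mathcomp Require Import all_boot all_order all_algebra.
From mathcomp Require Import classical_sets reals.
From mathcomp Require Import complex.

Set Implicit Arguments.
Unset Strict Implicit.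
Unset Printing Implicit Defensive.

Import Order.TTheory GRing.Theory Num.Theory.
Local Open Scope ring_scope.

Section Games.
Variable R : realType.
Local Notation C := (R[i]).

Definition psdmx (n : nat) (M : 'M[C]_n) : Prop :=
  M = map_mx Num.conj M^T /\
  forall v : 'cV[C]_n, 0 <= ((map_mx Num.conj v^T) *m M *m v) ord0 ord0.

Definition povm (n : nat) (A : finType) (P : A -> 'M[C]_n) : Prop :=
  (forall a, psdmx (P a)) /\ \sum_(a : A) P a = 1%:M.

Variable k : nat.
Variables (X A : 'I_k -> finType).

Definition inputs := {dffun forall j : 'I_k, X j}.
Definition answers := {dffun forall j : 'I_k, A j}.

(* Joint Hilbert space C^{d_1} (x) ... (x) C^{d_k}: basis indexed by
   tuples of local basis indices. *)
Definition jidx (d : 'I_k -> nat) := {dffun forall j : 'I_k, 'I_(d j)}.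

Definition unit_state (d : 'I_k -> nat) (psi : jidx d -> C) : Prop :=
  \sum_(i : jidx d) `|psi i| ^+ 2 = 1.

(* <psi| M_1 (x) ... (x) M_k |psi> *)
Definition tens_expect (d : 'I_k -> nat) (psi : jidx d -> C)
    (M : forall j : 'I_k, 'M[C]_(d j)) : C :=
  \sum_(i : jidx d) \sum_(i' : jidx d)
     Num.conj (psi i) * (\prod_(j : 'I_k) M j (i j) (i' j)) * psi i'.

Definition win_prob (mu : inputs -> R) (V : inputs -> answers -> bool)
    (d : 'I_k -> nat) (psi : jidx d -> C)
    (P : forall j : 'I_k, X j -> A j -> 'M[C]_(d j)) : R :=
  \sum_(x : inputs) mu x *
    \sum_(a : answers | V x a) @complex.Re R (tens_expect psi (fun j => P j (x j) (a j))).

Definition valstar (mu : inputs -> R) (V : inputs -> answers -> bool) : R :=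
  sup [set r : R | exists (d : 'I_k -> nat) (psi : jidx d -> C)
                          (P : forall j : 'I_k, X j -> A j -> 'M[C]_(d j)),
         [/\ unit_state psi, (forall j x, povm (P j x)) &
             r = win_prob mu V psi P]].

End Games.

Definition is_distr (R : realType) (T : finType) (p : T -> R) : Prop :=
  (forall t, 0 <= p t) /\ \sum_(t : T) p t = 1.

Definition tvdist (R : realType) (T : finType) (p q : T -> R) : R :=
  2^-1 * \sum_(t : T) `|p t - q t|.

Definition push_unif (R : realType) (T' T : finType) (f : T' -> T) : T -> R :=
  fun t => #|[set u : T' | f u == t]|%:R / #|T'|%:R.

Definition prod_distr (R : realType) (k : nat) (X : 'I_k -> finType)
    (mu : forall j : 'I_k, X j -> R) : inputs X -> R :=
  fun x => \prod_(j : 'I_k) mu j (x j).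

Definition unif_distr (R : realType) (k : nat) (X : 'I_k -> finType) :
    inputs X -> R :=
  fun _ => 1 / #|inputs X|%:R.

Definition pull_pred (k : nat) (X X' A : 'I_k -> finType)
    (f : forall j : 'I_k, X' j -> X j) (V : inputs X -> answers A -> bool) :
    inputs X' -> answers A -> bool :=
  fun x' a => V (finfun (fun j => f j (x' j)) : inputs X) a.

(* Main.v *)
Require Import Defs.
From HB Require Import structures.
From mathcomp Require Import all_boot all_order all_algebra.
From mathcomp Require Import classical_sets reals.
From mathcomp Require Import complex.
From mathcomp Require Import boolp sesquilinear spectral ring lra.
Import Order.TTheory GRing.Theory Num.Theory.
Local Open Scope ring_scope.

Section Helpers.
Local Open Scope sesquilinear_scope.
Local Open Scope complex_scope.
Set Implicit Arguments.
Unset Strict Implicit.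
Unset Printing Implicit Defensive.

Lemma big_dffun_distr (T : comNzRingType) (I : finType) (T_ : I -> finType)
  (F : forall i, T_ i -> T) :
  \prod_(i : I) \sum_(t : T_ i) F i t =
  \sum_(g : {dffun forall i, T_ i}) \prod_(i : I) F i (g i).
Proof.
under eq_bigr => i _ do rewrite (big_tag (fun i t => F i t) i).
rewrite bigA_distr_big_dep.
transitivity (\sum_(t : fprod T_) \prod_(i in I) [ffun t => F i t] (t i)).
  rewrite (@big_fprod _ _ _ _ _ I T_ (fun i => [ffun t => F i t])); apply: eq_bigr => g _; apply: eq_bigr => i _.
  by congr untag; apply/funext => t; rewrite ffunE.
rewrite (reindex (@fprod_of_dffun _ T_)); last first.
  by apply/onW_bij/fprod_of_dffun_bij.
apply: eq_bigr => g _; apply: eq_bigr => i _; by rewrite ffunE fprodE.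
Qed.
Lemma psd_factor (R : realType) n (M : 'M[R[i]]_n) : psdmx M ->
  exists B : 'M[R[i]]_n, forall i i', M i i' = \sum_l Num.conj (B l i) * B l i'.
Proof.
move=> [Mh Mpos].
have Mn : M \is normalmx.
  apply/normalmxP; by rewrite -Mh.
have /orthomx_spectralP := Mn.
set P := spectralmx M; set s := spectral_diag M => ME.
have Pu : P \is unitarymx by apply: spectral_unitarymx.
rewrite invmx_unitary // in ME.
have Mentry : forall i i', M i i' = \sum_l Num.conj (P l i) * s 0 l * P l i'.
  move=> i i'; rewrite ME !mxE; apply: eq_bigr => l _.
  rewrite !mxE (bigD1 l) //= big1 ?addr0; last first.
    by move=> m /negPf ml; rewrite !mxE ml mulr0n mulr0.
  by rewrite !mxE eqxx mulr1n.
have s0 : forall l, 0 <= s 0 l.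
  move=> l; have := Mpos ((row l P)^t*).
  have -> : (map_mx Num.conj ((row l P)^t*)^T) = row l P.
    by apply/matrixP => a b; rewrite !mxE conjCK.
  rewrite ME !mulmxA -row_mul.
  have /unitarymxP -> := Pu.
  have -> : (row l P)^t* = col l (P^t*) by apply/matrixP => a b; rewrite !mxE.
  have key : P *m col l (P^t*) = col l 1%:M.
    apply/matrixP => a b; move/matrixP: (unitarymxP Pu) => /(_ a l).
    by rewrite !mxE => <-; apply: eq_bigr => c _; rewrite !mxE.
  rewrite -!mulmxA key mulmxA -row_mul mul1mx.
  rewrite !mxE (bigD1 l) //= big1 => [|m ml]; last first.
    by rewrite !mxE (negPf ml) mulr0.
  by rewrite !mxE !eqxx !mulr1n mulr1 addr0.
exists (\matrix_(l, i) (sqrtC (s 0 l) * P l i)) => i i'.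
rewrite Mentry; apply: eq_bigr => l _; rewrite !mxE rmorphM /=.
have sr : Num.conj (sqrtC (s 0 l)) = sqrtC (s 0 l).
  by apply/CrealP; apply/ger0_real; rewrite sqrtC_ge0.
rewrite sr mulrCA !mulrA -expr2 sqrtCK; ring.
Qed.

Section Tens.
Variable R : realType.
Local Notation C := (R[i]).

Lemma tens_sq k (d : 'I_k -> nat) (psi : jidx d -> C)
  (M B : forall j, 'M[C]_(d j)) :
  (forall j i i', M j i i' = \sum_l Num.conj (B j l i) * B j l i') ->
  tens_expect psi M =
  \sum_(l : jidx d) `|\sum_(i : jidx d) (\prod_j B j (l j) (i j)) * psi i| ^+ 2.
Proof.
move=> HM; rewrite /tens_expect.
under eq_bigr => i _ do under eq_bigr => i' _ do
  rewrite (eq_bigr _ (fun j _ => HM j (i j) (i' j))) big_dffun_distr.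
transitivity (\sum_(i : jidx d) \sum_(i' : jidx d) \sum_(l : jidx d)
   Num.conj (\prod_j B j (l j) (i j) * psi i) * ((\prod_j B j (l j) (i' j)) * psi i')).
  apply: eq_bigr => i _; apply: eq_bigr => i' _.
  rewrite big_distrr big_distrl /=; apply: eq_bigr => l _.
  rewrite big_split /= rmorphM rmorph_prod /=; ring.
transitivity (\sum_(l : jidx d) \sum_(i : jidx d) \sum_(i' : jidx d)
   Num.conj (\prod_j B j (l j) (i j) * psi i) * ((\prod_j B j (l j) (i' j)) * psi i')).
  under eq_bigr => i _ do rewrite exchange_big.
  by rewrite exchange_big.
apply: eq_bigr => l _; rewrite normCKC rmorph_sum big_distrl /=.
by apply: eq_bigr => i _; rewrite big_distrr.
Qed.

Lemma tens_sum k (A : 'I_k -> finType) (d : 'I_k -> nat) (psi : jidx d -> C)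
  (Q : forall j, A j -> 'M[C]_(d j)) :
  (forall j, \sum_(a : A j) Q j a = 1%:M) ->
  \sum_(a : answers A) tens_expect psi (fun j => Q j (a j)) =
  \sum_(i : jidx d) `|psi i| ^+ 2.
Proof.
move=> HQ; rewrite /tens_expect exchange_big /=; apply: eq_bigr => i _.
rewrite exchange_big /= (bigD1 i) //= [X in _ + X]big1 ?addr0; last first.
  move=> i' ii'.
  rewrite -big_distrl -big_distrr /= -(big_dffun_distr (fun j a => Q j a (i j) (i' j))).
  have [j ij] : exists j, i j != i' j.
    apply/existsP; apply: contraR ii' => /existsPn H.
    by apply/eqP/ffunP => j; move: (H j); rewrite negbK => /eqP.
  rewrite (bigD1 j) //= -summxE HQ mxE (negPf ij) mulr0n mul0r.
  by rewrite mulr0 mul0r.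
rewrite -big_distrl -big_distrr /= -(big_dffun_distr (fun j a => Q j a (i j) (i j))) big1 ?mulr1 ?normCKC //.
by move=> j _; rewrite -summxE HQ mxE eqxx.
Qed.

End Tens.

Section Game.
Variable R : realType.
Local Notation C := (R[i]).

Lemma Re_sum (I : Type) (r : seq I) (P : pred I) (F : I -> C) :
  complex.Re (\sum_(i <- r | P i) F i) = \sum_(i <- r | P i) complex.Re (F i).
Proof. by apply: (big_morph (@complex.Re R)) => // -[a b] [c d]. Qed.

Lemma Re_scale (c : R) (z : C) : complex.Re (c%:C * z) = c * complex.Re z.
Proof. by case: z => a b /=; rewrite !mul0r subr0. Qed.

Lemma tens_ge0 k (d : 'I_k -> nat) (psi : jidx d -> C)
  (M : forall j, 'M[C]_(d j)) :
  (forall j, psdmx (M j)) -> 0 <= tens_expect psi M.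
Proof.
move=> HM.
pose B := fun j => projT1 (cid (psd_factor (HM j))).
rewrite (@tens_sq _ _ _ _ _ B); last by move=> j; exact: (projT2 (cid (psd_factor (HM j)))).
by apply: sumr_ge0 => l _; apply: exprn_ge0.
Qed.

Definition wval k (X A : 'I_k -> finType) (V : inputs X -> answers A -> bool)
  (d : 'I_k -> nat) (psi : jidx d -> C)
  (P : forall j : 'I_k, X j -> A j -> 'M[C]_(d j)) (x : inputs X) : R :=
  \sum_(a : answers A | V x a) complex.Re (tens_expect psi (fun j => P j (x j) (a j))).

Lemma wval_bounds k (X A : 'I_k -> finType) (V : inputs X -> answers A -> bool)
  (d : 'I_k -> nat) (psi : jidx d -> C)
  (P : forall j : 'I_k, X j -> A j -> 'M[C]_(d j)) (x : inputs X) :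
  unit_state psi -> (forall j x, povm (P j x)) ->
  0 <= wval V psi P x <= 1.
Proof.
move=> Hpsi HP.
have Tge0 : forall a : answers A,
    0 <= complex.Re (tens_expect psi (fun j => P j (x j) (a j))).
  move=> a; have := tens_ge0 psi (fun j => (HP j (x j)).1 (a j)).
  by rewrite lecE => /andP[_].
apply/andP; split; first by apply: sumr_ge0.
apply: (@le_trans _ _ (\sum_(a : answers A)
   complex.Re (tens_expect psi (fun j => P j (x j) (a j))))).
  rewrite [X in _ <= X](bigID (fun a => V x a)) /= lerDl.
  by apply: sumr_ge0.
rewrite -Re_sum (tens_sum psi (Q := fun j => P j (x j))).
  by rewrite Hpsi.
by move=> j; exact: (HP j (x j)).2.
Qed.

Lemma tv_bound (T : finType) (p q w : T -> R) :
  \sum_t p t = 1 -> \sum_t q t = 1 -> (forall t, 0 <= w t <= 1) ->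
  `|\sum_t p t * w t - \sum_t q t * w t| <= tvdist p q.
Proof.
move=> Hp Hq Hw.
have -> : \sum_t p t * w t - \sum_t q t * w t =
          \sum_t (p t - q t) * (w t - 2^-1).
  have E : \sum_t (p t - q t) * 2^-1 = 0.
    by rewrite -mulr_suml sumrB Hp Hq subrr mul0r.
  have F : forall t, (p t - q t) * (w t - 2^-1) = p t * w t - q t * w t - (p t - q t) / 2.
    by move=> t; rewrite /GRing.inv /=; ring.
  by rewrite (eq_bigr _ (fun t _ => F t)) !sumrB E subr0.
rewrite /tvdist mulr_sumr; apply: (le_trans (ler_norm_sum _ _ _)).
apply: ler_sum => t _; rewrite normrM mulrC ler_wpM2r //.
have /andP[h0 h1] := Hw t; rewrite ler_norml; apply/andP; split.
  by lra.
by lra.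
Qed.

Lemma tv_prod k (X : 'I_k -> finType) (p q : forall j, X j -> R) :
  (forall j, is_distr (p j)) -> (forall j, is_distr (q j)) ->
  tvdist (prod_distr p) (prod_distr q) <= \sum_j tvdist (p j) (q j).
Proof.
move=> Hp Hq.
pose g (m : nat) (j : 'I_k) (t : X j) := if (j < m)%N then q j t else p j t.
pose u (m : nat) (x : inputs X) := \prod_j g m j (x j).
pose h (j0 j : 'I_k) (t : X j) : R := if j == j0 then `|p j t - q j t| else g j0 j t.
have g0 : forall m j t, 0 <= g m j t.
  by move=> m j t; rewrite /g; case: ifP => _; [exact: (Hq j).1 | exact: (Hp j).1].
have g1 : forall m j, \sum_t g m j t = 1.
  by move=> m j; rewrite /g; case: (j < m)%N; [exact: (Hq j).2 | exact: (Hp j).2].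
have C2 : forall (j0 : 'I_k) x, `|u j0 x - u j0.+1 x| = \prod_j h j0 j (x j).
  move=> j0 x; rewrite /u (bigD1 j0) //= [Z in _ - Z](bigD1 j0) //=.
  rewrite [Z in _ = Z](bigD1 j0) //= /h eqxx.
  have -> : \prod_(j | j != j0) g (j0.+1) j (x j) = \prod_(j | j != j0) g j0 j (x j).
    apply: eq_bigr => j jj0; rewrite /g ltnS leq_eqVlt.
    by have -> : (nat_of_ord j == nat_of_ord j0) = false by apply/negbTE.
  have -> : \prod_(j | j != j0) h j0 j (x j) = \prod_(j | j != j0) g j0 j (x j).
    by apply: eq_bigr => j jj0; rewrite /h (negbTE jj0).
  rewrite /g ltnn ltnSn -mulrBl normrM; congr (_ * _).
  apply: ger0_norm; apply: prodr_ge0 => j _; case: ifP => _; [exact: (Hq j).1|exact: (Hp j).1].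
have C3 : forall j0 : 'I_k, \sum_(x : inputs X) \prod_j h j0 j (x j) =
                             \sum_t `|p j0 t - q j0 t|.
  move=> j0; rewrite -(big_dffun_distr (fun j t => h j0 j t)) (bigD1 j0) //=.
  rewrite [Z in _ * Z]big1 ?mulr1.
    by apply: eq_bigr => t _; rewrite /h eqxx.
  by move=> j jj0; under eq_bigr => t _ do rewrite /h (negbTE jj0); apply: g1.
rewrite /tvdist -mulr_sumr; apply: ler_wpM2l; first by rewrite invr_ge0 ler0n.
apply: (@le_trans _ _ (\sum_(x : inputs X) \sum_(j : 'I_k) `|u j x - u j.+1 x|)).
  apply: ler_sum => x _.
  have -> : prod_distr p x - prod_distr q x = - \sum_(0 <= m < k) (u m.+1 x - u m x).
    rewrite telescope_sumr // opprB /u /prod_distr; congr (_ - _).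
      by apply: eq_bigr => j _; rewrite /g ltn_ord.
  rewrite normrN big_mkord; apply: (le_trans (ler_norm_sum _ _ _)).
  by apply: ler_sum => j _; rewrite distrC.
rewrite exchange_big /=; apply: ler_sum => j _.
by under eq_bigr => x _ do rewrite C2; rewrite C3.
Qed.

End Game.

Section Transfer.
Variable R : realType.
Local Notation C := (R[i]).

Lemma sum_ones (T : finType) : \sum_(t : T) (1 : R) = #|T|%:R.
Proof. by rewrite sumr_const. Qed.

Lemma card_inputs k (X' : 'I_k -> finType) :
  #|inputs X'|%:R = \prod_j (#|X' j|%:R : R).
Proof.
rewrite -sum_ones.
transitivity (\sum_(y : inputs X') \prod_(j : 'I_k) (1 : R)).
  by apply: eq_bigr => y _; rewrite big1.
rewrite -(big_dffun_distr (fun j (t : X' j) => (1 : R))).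
by apply: eq_bigr => j _; rewrite sum_ones.
Qed.

Lemma fiber_count (T' T : finType) (g : T' -> T) (x : T) :
  \sum_(t : T') ((g t == x)%:R : R) = #|[set u | g u == x]|%:R.
Proof.
rewrite -sum1dep_card natr_sum big_mkcond /=.
by rewrite [RHS]big_mkcond; apply: eq_bigr => t _; case: (g t == x).
Qed.

Lemma prod_ind k (X : 'I_k -> finType) (x y : inputs X) :
  ((y == x)%:R : R) = \prod_j ((y j == x j)%:R).
Proof.
have [->|yx] := eqVneq y x.
  by rewrite big1 // => j _; rewrite eqxx.
have [j ij] : exists j, y j != x j.
  apply/existsP; apply: contraR yx => /existsPn H.
  by apply/eqP/ffunP => j; move: (H j); rewrite negbK => /eqP.
by rewrite (bigD1 j) //= (negbTE ij) mul0r.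
Qed.

Variables (k : nat) (X X' : 'I_k -> finType).
Variable f : forall j, X' j -> X j.
Arguments f : clear implicits.
Hypothesis X'0 : forall j, (0 < #|X' j|)%N.

Definition Fm (y : inputs X') := (finfun (fun j => f j (y j)) : inputs X).
Definition pushj j := push_unif R (f j).
Arguments pushj : clear implicits.

Lemma PI (y : inputs X') (x : inputs X) :
  \prod_j ((f j (y j) == x j)%:R / #|X' j|%:R) =
  ((Fm y == x)%:R / #|inputs X'|%:R : R).
Proof.
rewrite big_split /= prod_ind card_inputs prodfV; congr (_ * _).
by apply: eq_bigr => j _; rewrite /Fm ffunE.
Qed.

Lemma pushj_distr j : is_distr (pushj j).
Proof.
split=> [t|]; first by rewrite /pushj /push_unif divr_ge0 // ler0n.
rewrite /pushj /push_unif -mulr_suml.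
under eq_bigr => t _ do rewrite -fiber_count.
rewrite exchange_big /=.
have E : forall t, \sum_x ((f j t == x)%:R : R) = 1.
  move=> t; rewrite (bigD1 (f j t)) //= eqxx big1 ?addr0 // => x /negbTE.
  by rewrite eq_sym => ->.
under eq_bigr => t _ do rewrite E.
rewrite sum_ones mulfV // pnatr_eq0 -lt0n; exact: X'0.
Qed.

Lemma T1 (h : inputs X -> R) :
  \sum_(y : inputs X') unif_distr R y * h (Fm y) =
  \sum_(x : inputs X) prod_distr pushj x * h x.
Proof.
transitivity (\sum_(y : inputs X') \sum_(x : inputs X)
   ((Fm y == x)%:R / #|inputs X'|%:R) * h x).
  apply: eq_bigr => y _; rewrite (bigD1 (Fm y)) //= big1 ?addr0.
    by rewrite eqxx /unif_distr.
  by move=> x /negbTE; rewrite eq_sym => ->; rewrite !mul0r.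
rewrite exchange_big /=; apply: eq_bigr => x _.
rewrite -mulr_suml; congr (_ * _).
under eq_bigr => y _ do rewrite -PI.
rewrite -(big_dffun_distr (fun j (t : X' j) => (f j t == x j)%:R / #|X' j|%:R)).
apply: eq_bigr => j _; rewrite -mulr_suml fiber_count //.
Qed.

Definition nfib j (x : X j) : nat := #|[set u | f j u == x]|.
Arguments nfib : clear implicits.
Definition cc j (x : X j) (t : X' j) : R :=
  if nfib j x == 0%N then 1 / #|X' j|%:R else (f j t == x)%:R / (nfib j x)%:R.
Arguments cc : clear implicits.

Lemma cc_ge0 j x t : 0 <= cc j x t.
Proof. by rewrite /cc; case: ifP => _; rewrite divr_ge0 ?ler0n. Qed.

Lemma cc_sum j x : \sum_t cc j x t = 1.
Proof.
rewrite /cc; have [n0|n0] := eqVneq (nfib j x) 0%N; rewrite ?n0 /=; last first.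
  by rewrite -mulr_suml fiber_count divff // pnatr_eq0.
  rewrite -mulr_suml sum_ones divff // pnatr_eq0 -lt0n; exact: X'0.
Qed.

Lemma push_cc j x t : pushj j x * cc j x t = (f j t == x)%:R / #|X' j|%:R.
Proof.
rewrite /pushj /push_unif /cc -/(nfib j x).
have X'n : (#|X' j|%:R : R) != 0 by rewrite pnatr_eq0 -lt0n; exact: X'0.
case: ifP => [/eqP n0|/negbT n0].
  rewrite n0 mul0r.
  case E: (f j t == x); last by rewrite !mul0r.
  have : (0 < nfib j x)%N by apply/card_gt0P; exists t; rewrite inE E.
  by rewrite n0.
have n0' : ((nfib j x)%:R : R) != 0 by rewrite pnatr_eq0.
by rewrite [LHS]mulrC mulrA divfK.
Qed.

Lemma T2 (H : inputs X -> inputs X' -> R) :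
  \sum_(x : inputs X) prod_distr pushj x *
     \sum_(y : inputs X') (\prod_j cc j (x j) (y j)) * H x y =
  \sum_(y : inputs X') unif_distr R y * H (Fm y) y.
Proof.
transitivity (\sum_(x : inputs X) \sum_(y : inputs X')
   ((Fm y == x)%:R / #|inputs X'|%:R) * H x y).
  apply: eq_bigr => x _; rewrite big_distrr /=; apply: eq_bigr => y _.
  by rewrite mulrA -big_split /= -PI; congr (_ * _); apply: eq_bigr => j _; rewrite push_cc.
rewrite exchange_big /=; apply: eq_bigr => y _.
rewrite (bigD1 (Fm y)) //= big1 ?addr0.
  by rewrite eqxx /unif_distr.
by move=> x /negbTE; rewrite eq_sym => ->; rewrite !mul0r.
Qed.

End Transfer.

Section Strat.
Variable R : realType.
Local Notation C := (R[i]).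
Variables (k : nat) (X X' A : 'I_k -> finType).
Variable f : forall j, X' j -> X j.
Arguments f : clear implicits.
Hypothesis X'0 : forall j, (0 < #|X' j|)%N.
Variable V : inputs X -> answers A -> bool.

Lemma eq_tens (d : 'I_k -> nat) (psi : jidx d -> C) (M N : forall j, 'M[C]_(d j)) :
  (forall j, M j = N j) -> tens_expect psi M = tens_expect psi N.
Proof.
move=> H; apply: eq_bigr => i _; apply: eq_bigr => i' _.
by congr (_ * _ * _); apply: eq_bigr => j _; rewrite H.
Qed.

Lemma win_wval (W : inputs X -> answers A -> bool) (nu : inputs X -> R)
  (d : 'I_k -> nat) (psi : jidx d -> C) (P : forall j, X j -> A j -> 'M[C]_(d j)) :
  win_prob nu W psi P = \sum_x nu x * wval W psi P x.
Proof. by []. Qed.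

Lemma win_pull (d : 'I_k -> nat) (psi : jidx d -> C)
  (P : forall j, X j -> A j -> 'M[C]_(d j)) :
  win_prob (@unif_distr R k X') (pull_pred f V) psi (fun j t => P j (f j t)) =
  win_prob (prod_distr (pushj R f)) V psi P.
Proof.
rewrite /win_prob -(T1 f (wval V psi P)); apply: eq_bigr => y _; congr (_ * _).
apply: eq_bigr => a _; congr (complex.Re _); apply: eq_tens => j.
by rewrite /Fm ffunE.
Qed.

Definition Pavg (d : 'I_k -> nat) (P' : forall j, X' j -> A j -> 'M[C]_(d j))
  j (x : X j) (a : A j) : 'M[C]_(d j) :=
  \sum_(t : X' j) (cc R f x t)%:C *: P' j t a.
Arguments Pavg {d} P' j x a.

Lemma povm_avg (d : 'I_k -> nat) (P' : forall j, X' j -> A j -> 'M[C]_(d j)) :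
  (forall j t, povm (P' j t)) -> forall j x, povm (Pavg P' j x).
Proof.
move=> HP j x; split.
  move=> a; split.
    apply/matrixP => u v; rewrite !mxE !summxE rmorph_sum /=.
    apply: eq_bigr => t _; rewrite !mxE rmorphM /=.
    have cr : Num.conj ((cc R f x t)%:C) = (cc R f x t)%:C := conjc_real _.
    rewrite cr.
    have := ((HP j t).1 a).1 => /matrixP /(_ u v); rewrite !mxE => ->.
    by [].
  move=> v; rewrite /Pavg mulmx_sumr mulmx_suml summxE.
  apply: sumr_ge0 => t _; rewrite -scalemxAr -scalemxAl mxE.
  apply: mulr_ge0; first by rewrite lecR cc_ge0.
  exact: ((HP j t).1 a).2.
rewrite /Pavg exchange_big /=.
under eq_bigr => t _ do rewrite -scaler_sumr (HP j t).2.
by rewrite -scaler_suml -rmorph_sum /= cc_sum // scale1r.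
Qed.

Lemma tens_avg (d : 'I_k -> nat) (psi : jidx d -> C)
  (P' : forall j, X' j -> A j -> 'M[C]_(d j)) (x : inputs X) (a : answers A) :
  tens_expect psi (fun j => Pavg P' j (x j) (a j)) =
  \sum_(y : inputs X') (\prod_j cc R f (x j) (y j))%:C *
      tens_expect psi (fun j => P' j (y j) (a j)).
Proof.
rewrite /tens_expect.
transitivity (\sum_(i : jidx d) \sum_(i' : jidx d) \sum_(y : inputs X')
  Num.conj (psi i) * ((\prod_j cc R f (x j) (y j))%:C *
     \prod_j P' j (y j) (a j) (i j) (i' j)) * psi i').
  apply: eq_bigr => i _; apply: eq_bigr => i' _.
  have E : forall j, Pavg P' j (x j) (a j) (i j) (i' j) =
     \sum_(t : X' j) (cc R f (x j) t)%:C * P' j t (a j) (i j) (i' j).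
    by move=> j; rewrite /Pavg summxE; apply: eq_bigr => t _; rewrite mxE.
  rewrite (eq_bigr _ (fun j _ => E j)).
  rewrite (big_dffun_distr (fun j t => (cc R f (x j) t)%:C * P' j t (a j) (i j) (i' j))).
  rewrite big_distrr big_distrl /=; apply: eq_bigr => y _.
  by rewrite big_split /= rmorph_prod.
under eq_bigr => i _ do rewrite exchange_big /=.
rewrite exchange_big /=; apply: eq_bigr => y _.
rewrite big_distrr /=; apply: eq_bigr => i _.
rewrite big_distrr /=; apply: eq_bigr => i' _.
ring.
Qed.

Lemma win_avg (d : 'I_k -> nat) (psi : jidx d -> C)
  (P' : forall j, X' j -> A j -> 'M[C]_(d j)) :
  win_prob (prod_distr (pushj R f)) V psi (Pavg P') =
  win_prob (@unif_distr R k X') (pull_pred f V) psi P'.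
Proof.
rewrite /win_prob.
pose H (x : inputs X) (y : inputs X') := \sum_(a : answers A | V x a)
   complex.Re (tens_expect psi (fun j => P' j (y j) (a j))).
rewrite -(T2 f X'0 H); apply: eq_bigr => x _; congr (_ * _).
under eq_bigr => a _ do rewrite tens_avg Re_sum.
rewrite exchange_big /=; apply: eq_bigr => y _.
by rewrite /H mulr_sumr; apply: eq_bigr => a _; rewrite Re_scale.
Qed.

End Strat.

End Helpers.

Theorem claim5p1 (R : realType) (k : nat) (X A X' : 'I_k -> finType)
    (mu : forall j : 'I_k, X j -> R) (V : inputs X -> answers A -> bool)
    (gamma : R) (f : forall j : 'I_k, X' j -> X j) :
  (forall j, is_distr (mu j)) ->
  0 < gamma ->
  (forall j, (0 < #|X' j|)%N) ->
  (forall j, tvdist (@push_unif R (X' j) (X j) (f j)) (mu j) <= gamma / k%:R) ->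
  `| valstar (@unif_distr R k X') (pull_pred f V)
     - valstar (prod_distr mu) V | <= gamma.
Proof.
move=> Hmu Hg HX' Htv.
pose q := prod_distr (pushj R f).
have E1 : valstar (@unif_distr R k X') (pull_pred f V) = valstar q V.
  rewrite /valstar; congr sup; apply/seteqP; split => r /=.
    move=> [d [psi [P' [Hpsi HP' ->]]]].
    exists d, psi, (@Pavg R k X X' A f d P'); split => //.
      exact: povm_avg.
    by rewrite win_avg.
  move=> [d [psi [P [Hpsi HP ->]]]].
  exists d, psi, (fun j t => P j (f j t)); split => //.
  by rewrite win_pull.
rewrite E1.
have distr_prod : forall p : forall j, X j -> R, (forall j, is_distr (p j)) ->
    (forall x, 0 <= prod_distr p x) /\ \sum_x prod_distr p x = 1.
  move=> p Hp; split.
    by move=> x; apply: prodr_ge0 => j _; exact: (Hp j).1.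
  rewrite /prod_distr -(big_dffun_distr (fun j t => p j t)).
  by apply: big1 => j _; exact: (Hp j).2.
have Hpush : forall j, is_distr (pushj R f (j := j)) by move=> j; exact: pushj_distr.
have [q0 q1] := distr_prod _ Hpush.
have [m0 m1] := distr_prod _ Hmu.
have Hb : forall d (psi : jidx d -> R[i]) (P : forall j, X j -> A j -> 'M[R[i]]_(d j)),
    unit_state psi -> (forall j x, povm (P j x)) ->
    `|win_prob q V psi P - win_prob (prod_distr mu) V psi P| <= gamma.
  move=> d psi P Hpsi HP; rewrite !win_wval.
  apply: le_trans (tv_bound q1 m1 _) _.
    by move=> x; apply: wval_bounds.
  apply: le_trans (tv_prod Hpush Hmu) _.
  apply: (@le_trans _ _ (\sum_(j : 'I_k) gamma / k%:R)).
    by apply: ler_sum => j _; exact: Htv.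
  rewrite sumr_const card_ord.
  have [k0|k0] := eqVneq k 0%N.
    by rewrite k0 mulr0n ltW.
  by rewrite -[Z in Z <= _]mulr_natr divfK // pnatr_eq0.
have win_le1 : forall (nu : inputs X -> R), (forall x, 0 <= nu x) -> \sum_x nu x = 1 ->
    forall d (psi : jidx d -> R[i]) (P : forall j, X j -> A j -> 'M[R[i]]_(d j)),
    unit_state psi -> (forall j x, povm (P j x)) -> win_prob nu V psi P <= 1.
  move=> nu n0 n1 d psi P Hpsi HP; rewrite win_wval -n1; apply: ler_sum => x _.
  rewrite -[leRHS]mulr1; apply: ler_wpM2l => //.
  by have /andP[] := wval_bounds V x Hpsi HP.
have [ne|e] := pselect (exists d (psi : jidx d -> R[i])
   (P : forall j, X j -> A j -> 'M[R[i]]_(d j)),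
   unit_state psi /\ (forall j x, povm (P j x))); last first.
  have -> : valstar q V = valstar (prod_distr mu) V.
    rewrite /valstar; congr sup; apply/seteqP; split => r /=.
      by move=> [d [psi [P [H1 H2 _]]]]; exfalso; apply: e; exists d, psi, P.
    by move=> [d [psi [P [H1 H2 _]]]]; exfalso; apply: e; exists d, psi, P.
  by rewrite subrr normr0 ltW.
have hub : forall (nu : inputs X -> R), (forall x, 0 <= nu x) -> \sum_x nu x = 1 ->
   has_ubound [set r : R | exists (d : 'I_k -> nat) (psi : jidx d -> R[i])
                          (P : forall j : 'I_k, X j -> A j -> 'M[R[i]]_(d j)),
         [/\ unit_state psi, (forall j x, povm (P j x)) &
             r = win_prob nu V psi P]].
  move=> nu n0 n1; exists 1 => r [d [psi [P [H1 H2 ->]]]].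
  exact: win_le1.
have hne : forall (nu : inputs X -> R),
   ([set r : R | exists (d : 'I_k -> nat) (psi : jidx d -> R[i])
                          (P : forall j : 'I_k, X j -> A j -> 'M[R[i]]_(d j)),
         [/\ unit_state psi, (forall j x, povm (P j x)) &
             r = win_prob nu V psi P]] !=set0)%classic.
  move=> nu; have [d [psi [P [H1 H2]]]] := ne.
  by exists (win_prob nu V psi P), d, psi, P.
rewrite ler_norml; apply/andP; split.
  rewrite lerBrDl lerBlDr addrC; apply: ge_sup; first exact: hne.
  move=> r [d [psi [P [H1 H2 ->]]]].
  have := Hb d psi P H1 H2; rewrite ler_norml => /andP[h1 h2].
  apply: (@le_trans _ _ (win_prob q V psi P + gamma)); first by lra.
  have hs : win_prob q V psi P <= valstar q V.
    by apply: (ub_le_sup (hub _ q0 q1)); exists d, psi, P.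
  by lra.
rewrite lerBlDr addrC; apply: ge_sup; first exact: hne.
move=> r [d [psi [P [H1 H2 ->]]]].
have := Hb d psi P H1 H2; rewrite ler_norml => /andP[h1 h2].
apply: (@le_trans _ _ (win_prob (prod_distr mu) V psi P + gamma)); first by lra.
have hs : win_prob (prod_distr mu) V psi P <= valstar (prod_distr mu) V.
  by apply: (ub_le_sup (hub _ m0 m1)); exists d, psi, P.
by lra.
Qed.
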